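(* Let $k\ge1$, $n_0>1$, and let $A_0,\dots,A_{k-1}$ belong to the Bloch space $\mathfrak B$, not all identically zero. Suppose there is $\nu\in[0,1)$ such that for every $\theta\in[0,2\pi)$ the point $z_\theta=\nu e^{i\theta}$ satisfies $A_j(z_\theta)\ne0$ for some $j\in\{0,\dots,k-1\}$. Then every solution $f$ in $\mathbb D$ of $$(f^{(k)})^{n_0}+A_{k-1}(z)(f^{(k-1)})^{n_0}+\cdots+A_1(z)(f')^{n_0}+A_0(z)f^{n_0}=0$$ belongs to $\bigcap_{0<s<\infty}\mathfrak B^s$.
   Context: $\mathbb D$ is the open unit disk. For $s>0$, the Bloch-type space $\mathfrak B^s$ consists of analytic $g$ on $\mathbb D$ with $|g(0)|+\sup_{z\in\mathbb D}|g'(z)|(1-|z|^2)^s<\infty$; the Bloch space is $\mathfrak B=\mathfrak B^1$. A solution is an analytic function on $\mathbb D$ satisfying the equation, where the real powers $(f^{(j)})^{n_0}$ are understood via some choice of branches, so that $|(f^{(j)})^{n_0}|=|f^{(j)}|^{n_0}$. *)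

(* Defs.v *)
From Stdlib Require Import Reals Lra.
Open Scope R_scope.

Definition Cplx : Type := (R * R)%type.
Definition C0 : Cplx := (0, 0).
Definition RtoC (x : R) : Cplx := (x, 0).
Definition Cadd (z w : Cplx) : Cplx := (fst z + fst w, snd z + snd w).
Definition Copp (z : Cplx) : Cplx := (- fst z, - snd z).
Definition Csub (z w : Cplx) : Cplx := Cadd z (Copp w).
Definition Cmul (z w : Cplx) : Cplx :=
  (fst z * fst w - snd z * snd w, fst z * snd w + snd z * fst w).
Definition Cmod (z : Cplx) : R := sqrt (fst z ^ 2 + snd z ^ 2).
Definition Cexp (z : Cplx) : Cplx := (exp (fst z) * cos (snd z), exp (fst z) * sin (snd z)).
Definition polar (r theta : R) : Cplx := (r * cos theta, r * sin theta).

Definition inD (z : Cplx) : Prop := Cmod z < 1.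

Definition has_cderiv (f : Cplx -> Cplx) (z l : Cplx) : Prop :=
  forall eps : R, 0 < eps -> exists delta : R, 0 < delta /\
    forall h : Cplx, h <> C0 -> Cmod h < delta ->
      Cmod (Csub (Csub (f (Cadd z h)) (f z)) (Cmul l h)) <= eps * Cmod h.

Definition analytic_D (f : Cplx -> Cplx) : Prop :=
  forall z, inD z -> exists l, has_cderiv f z l.

(* Bloch-type space B^s: analytic g with sup_{z in D} |g'(z)| (1-|z|^2)^s < oo
   (|g(0)| is automatically finite). *)
Definition bloch_type (s : R) (g : Cplx -> Cplx) : Prop :=
  exists g' : Cplx -> Cplx,
    (forall z, inD z -> has_cderiv g z (g' z)) /\
    exists M : R, forall z, inD z ->
      Cmod (g' z) * Rpower (1 - Cmod z ^ 2) s <= M.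

Definition bloch (g : Cplx -> Cplx) : Prop := bloch_type 1 g.

(* p is a value of the real power w^a for some choice of branch of log w
   (with 0^a = 0); every such value satisfies |p| = |w|^a. *)
Definition is_rpow (a : R) (w p : Cplx) : Prop :=
  (w = C0 /\ p = C0) \/
  (w <> C0 /\ exists L : Cplx, Cexp L = w /\ p = Cexp (Cmul (RtoC a) L)).

Fixpoint Csum (k : nat) (u : nat -> Cplx) : Cplx :=
  match k with
  | O => C0
  | S k' => Cadd (Csum k' u) (u k')
  end.

(* Submission.v *)
Require Import Defs.
From Stdlib Require Import Reals Lra Psatz.
From Coquelicot Require Coquelicot.
Import Coquelicot.Hierarchy Coquelicot.Derive Coquelicot.AutoDerive.
Open Scope R_scope.


Lemma decr (f df : R->R) a b : a <= b ->
  (forall x, a <= x <= b -> derivable_pt_lim f x (df x)) ->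
  (forall x, a<=x<=b -> df x <= 0) -> f b <= f a.
Proof.
  intros hab hd hn.
  destruct (Derive.MVT_gen f a b df) as [c [hc e]].
  - intros x hx. rewrite Rmin_left in hx by lra. rewrite Rmax_right in hx by lra.
    apply Derive.is_derive_Reals. apply hd; lra.
  - intros x hx. rewrite Rmin_left in hx by lra. rewrite Rmax_right in hx by lra.
    apply derivable_continuous_pt. exists (df x). apply hd; lra.
  - rewrite Rmin_left in hc by lra. rewrite Rmax_right in hc by lra.
    assert (df c <= 0) by (apply hn; lra). nra.
Qed.

Lemma Cmod_ge0 z : 0 <= Cmod z.
Proof. unfold Cmod. apply sqrt_pos. Qed.

Lemma Cmod_sq z : Cmod z * Cmod z = fst z ^ 2 + snd z ^ 2.
Proof. unfold Cmod. apply sqrt_sqrt. nra. Qed.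

Lemma Cmod_C0 : Cmod C0 = 0.
Proof. unfold Cmod, C0. cbn [fst snd]. replace (0^2+0^2) with 0 by ring. apply sqrt_0. Qed.

Lemma Cmod_pos z : z <> C0 -> 0 < Cmod z.
Proof.
  intros h. destruct z as [x y]. unfold Cmod. cbn [fst snd]. apply sqrt_lt_R0.
  destruct (Req_dec x 0); destruct (Req_dec y 0); subst.
  - exfalso; apply h; reflexivity.
  - nra.
  - nra.
  - nra.
Qed.

Lemma sq_le_Cmod a b : 0 <= b -> a * a <= b * b -> a <= b.
Proof. intros. nra. Qed.

Lemma fst_le_Cmod z : Rabs (fst z) <= Cmod z.
Proof.
  apply sq_le_Cmod. apply Cmod_ge0. rewrite Cmod_sq.
  rewrite <- Rabs_mult, Rabs_right by nra. nra.
Qed.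

Lemma dot_le a b c d : a*c + b*d <= Cmod (a,b) * Cmod (c,d).
Proof.
  destruct (Rle_or_lt (a*c+b*d) 0).
  - pose proof (Cmod_ge0 (a,b)); pose proof (Cmod_ge0 (c,d)); nra.
  - apply sq_le_Cmod. pose proof (Cmod_ge0 (a,b)); pose proof (Cmod_ge0 (c,d)); nra.
    replace (Cmod (a, b) * Cmod (c, d) * (Cmod (a, b) * Cmod (c, d))) with
      ((Cmod (a, b) * Cmod (a, b)) * (Cmod (c, d) * Cmod (c, d))) by ring.
    rewrite !Cmod_sq. cbn [fst snd]. pose proof (pow2_ge_0 (a*d-b*c)). nra.
Qed.

Lemma Cmod_tri z w : Cmod (Cadd z w) <= Cmod z + Cmod w.
Proof.
  destruct z as [a b]; destruct w as [c d].
  apply sq_le_Cmod. pose proof (Cmod_ge0 (a,b)); pose proof (Cmod_ge0 (c,d)); lra.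
  rewrite Cmod_sq. simpl.
  pose proof (dot_le a b c d).
  replace ((Cmod (a, b) + Cmod (c, d)) * (Cmod (a, b) + Cmod (c, d))) with
    (Cmod (a, b) * Cmod (a, b) + 2 * (Cmod (a, b) * Cmod (c, d)) + Cmod (c, d) * Cmod (c, d)) by ring.
  rewrite !Cmod_sq. simpl. nra.
Qed.

Lemma Cmod_mul z w : Cmod (Cmul z w) = Cmod z * Cmod w.
Proof.
  apply Rle_antisym; apply sq_le_Cmod; try (apply Cmod_ge0);
  try (pose proof (Cmod_ge0 z); pose proof (Cmod_ge0 w); nra);
  replace (Cmod z * Cmod w * (Cmod z * Cmod w)) with ((Cmod z * Cmod z) * (Cmod w * Cmod w)) by ring;
  rewrite !Cmod_sq; unfold Cmul; simpl; nra.
Qed.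

Lemma Cmod_opp_eq z w : Cadd z w = C0 -> Cmod z = Cmod w.
Proof.
  intros h. assert (h1 := f_equal fst h). assert (h2 := f_equal snd h).
  simpl in h1, h2. unfold Cmod. f_equal. nra.
Qed.

Lemma Csum_bound n (u : nat -> Cplx) B :
  (forall j, (j < n)%nat -> Cmod (u j) <= B) -> Cmod (Csum n u) <= INR n * B.
Proof.
  induction n; intros h; cbn [Csum].
  - rewrite Cmod_C0. change (INR 0) with 0. lra.
  - eapply Rle_trans. apply Cmod_tri. rewrite S_INR.
    assert (Cmod (Csum n u) <= INR n * B) by (apply IHn; intros; apply h; lia).
    assert (Cmod (u n) <= B) by (apply h; lia). lra.
Qed.

Lemma Cexp_mod z : Cmod (Cexp z) = exp (fst z).
Proof.
  unfold Cmod, Cexp. cbn [fst snd].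
  replace ((exp (fst z) * cos (snd z)) ^ 2 + (exp (fst z) * sin (snd z)) ^ 2)
    with (exp (fst z) * exp (fst z) * (sin (snd z) ^ 2 + cos (snd z) ^2)) by ring.
  rewrite <- !Rsqr_pow2, sin2_cos2. rewrite Rmult_1_r. apply sqrt_square.
  pose proof (exp_pos (fst z)); lra.
Qed.

Lemma rpow_mod a w p : is_rpow a w p -> w <> C0 -> Cmod p = Rpower (Cmod w) a.
Proof.
  intros [[h1 h2]|[h1 [L [hL hp]]]] hw. contradiction.
  subst. rewrite !Cexp_mod. unfold Rpower. rewrite ln_exp. f_equal. simpl. ring.
Qed.

Lemma rpow_0 a w p : is_rpow a w p -> w = C0 -> p = C0.
Proof. intros [[h1 h2]|[h1 _]] hw. auto. contradiction. Qed.

Lemma snd_le_Cmod z : Rabs (snd z) <= Cmod z.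
Proof.
  apply sq_le_Cmod. apply Cmod_ge0. rewrite Cmod_sq.
  rewrite <- Rabs_mult, Rabs_right by nra. nra.
Qed.

Definition rp (w : Cplx) (t : R) : Cplx := (t * fst w, t * snd w).

Lemma Cmod_rp w t : fst w^2 + snd w^2 = 1 -> Cmod (rp w t) = Rabs t.
Proof.
  intros hw. unfold Cmod, rp. cbn [fst snd].
  replace ((t * fst w) ^ 2 + (t * snd w) ^ 2) with (Rsqr t).
  apply sqrt_Rsqr_abs. unfold Rsqr. 
  transitivity (t*t*(fst w ^ 2 + snd w ^ 2)). rewrite hw; ring. ring.
Qed.

Lemma quot_bound (N h e : R) : h <> 0 -> Rabs N <= e/2 * Rabs h -> 0 < e -> Rabs (N / h) < e.
Proof.
  intros hh hN he. unfold Rdiv. rewrite Rabs_mult, Rabs_inv.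
  assert (0 < Rabs h) by (apply Rabs_pos_lt; auto).
  apply Rmult_le_compat_r with (r := / Rabs h) in hN.
  2: left; apply Rinv_0_lt_compat; auto.
  replace (e / 2 * Rabs h * / Rabs h) with (e/2) in hN by (field; lra). lra.
Qed.

Lemma fin_step A B L h eps : h<>0 -> 0<eps -> Rabs (A - B - h*L) <= eps/2*Rabs h ->
  Rabs ((A-B)/h - L) < eps.
Proof.
  intros. replace ((A-B)/h - L) with ((A - B - h*L)/h) by (field; auto).
  apply quot_bound; auto.
Qed.

Lemma ray_deriv G l w t : fst w^2 + snd w^2 = 1 -> has_cderiv G (rp w t) l ->
  derivable_pt_lim (fun t => fst (G (rp w t))) t (fst (Cmul l w)) /\
  derivable_pt_lim (fun t => snd (G (rp w t))) t (snd (Cmul l w)).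
Proof.
  intros hw H.
  assert (key : forall eps, 0 < eps -> exists delta : posreal, forall h, h <> 0 -> Rabs h < delta ->
     Cmod (Csub (Csub (G (rp w (t + h))) (G (rp w t))) (Cmul l (rp w h))) <= eps/2 * Rabs h).
  { intros eps heps. destruct (H (eps/2)) as [d [hd hh]]. lra.
    exists (mkposreal d hd). intros h h0 hd'. simpl in hd'.
    assert (e : rp w (t+h) = Cadd (rp w t) (rp w h)).
    { unfold rp, Cadd. cbn [fst snd]. f_equal; ring. }
    rewrite e. rewrite <- Cmod_rp with (w := w) by auto. apply hh.
    - intro c. assert (c1 := f_equal fst c). assert (c2 := f_equal snd c).
      unfold rp, C0 in c1, c2. cbn [fst snd] in c1, c2.
      apply h0. assert (h*h*(fst w ^ 2 + snd w ^ 2) = 0) by nra. rewrite hw in H0. nra.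
    - rewrite Cmod_rp by auto. auto. }
  split; intros eps heps; destruct (key eps heps) as [d hd]; exists d; intros h h0 hh;
  specialize (hd h h0 hh);
  [pose proof (Rle_trans _ _ _ (fst_le_Cmod _) hd) as h1 |
   pose proof (Rle_trans _ _ _ (snd_le_Cmod _) hd) as h1];
  unfold Csub, Cadd, Copp, Cmul, rp in h1 |- *; cbn [fst snd] in h1 |- *;
  apply fin_step; auto; (eapply Rle_trans; [|exact h1]); right; f_equal; ring.
Qed.

Lemma dlin a b f g h x df dg dh : derivable_pt_lim f x df -> derivable_pt_lim g x dg ->
  derivable_pt_lim h x dh ->
  derivable_pt_lim (fun t => a*f t + b*g t - h t) x (a*df + b*dg - dh).
Proof.
  intros H1 H2 H3.
  apply (derivable_pt_lim_minus (fun t => a * f t + b * g t) h); auto.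
  apply (derivable_pt_lim_plus (fun t => a * f t) (fun t => b * g t)).
  apply (derivable_pt_lim_scal f a); auto.
  apply (derivable_pt_lim_scal g b); auto.
Qed.

Lemma compare (u1 u2 v du1 du2 dv : R -> R) r : 0 <= r ->
  (forall t, 0 <= t <= r -> derivable_pt_lim u1 t (du1 t) /\
      derivable_pt_lim u2 t (du2 t) /\ derivable_pt_lim v t (dv t)) ->
  (forall t, 0 <= t <= r -> Cmod (du1 t, du2 t) <= dv t) ->
  Cmod (u1 r - u1 0, u2 r - u2 0) <= v r - v 0.
Proof.
  intros hr hd hb.
  set (d1 := u1 r - u1 0). set (d2 := u2 r - u2 0). set (c := Cmod (d1, d2)).
  assert (hc : 0 <= c) by apply Cmod_ge0.
  destruct (Req_dec c 0) as [c0|cn].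
  - rewrite c0.
    assert (- v r <= - v 0); [|lra].
    apply (decr (fun t => 0*u1 t + 0*u2 t - v t) (fun t => 0*du1 t + 0*du2 t - dv t) 0 r) in hr.
    + lra.
    + intros x hx. destruct (hd x hx) as [a [b e]]. apply dlin; auto.
    + intros x hx. pose proof (hb x hx). pose proof (Cmod_ge0 (du1 x, du2 x)). lra.
  - set (e1 := d1 / c). set (e2 := d2/c).
    assert (he : Cmod (e1, e2) = 1).
    { assert (Cmod (e1, e2) = Cmod (RtoC (/c)) * c).
      { unfold c. rewrite <- Cmod_mul. unfold Cmul, RtoC, e1, e2. cbn [fst snd]. f_equal. f_equal. all: fold c; unfold Rdiv; ring. }
      rewrite H. unfold Cmod, RtoC; cbn [fst snd]. replace ((/c)^2 + 0^2) with (Rsqr (/c)) by (unfold Rsqr; field; auto).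
      rewrite sqrt_Rsqr. field; auto. left; apply Rinv_0_lt_compat; lra. }
    assert (hdot : e1 * d1 + e2 * d2 = c).
    { unfold e1, e2. pose proof (Cmod_sq (d1,d2)). fold c in H. cbn [fst snd] in H.
      field_simplify; auto. rewrite <- H. field; auto. }
    apply (decr (fun t => e1*u1 t + e2*u2 t - v t) (fun t => e1*du1 t + e2*du2 t - dv t) 0 r) in hr.
    + unfold d1, d2 in hdot. nra.
    + intros x hx. destruct (hd x hx) as [a [b e]]. apply dlin; auto.
    + intros x hx. pose proof (hb x hx). pose proof (dot_le e1 e2 (du1 x) (du2 x)). rewrite he in H0. lra.
Qed.

Lemma d_v M t : t < 1 -> derivable_pt_lim (fun t => - M * ln (1 - t)) t (M / (1 - t)).
Proof.
  intros h. apply is_derive_Reals. auto_derive. lra. field. lra.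
Qed.

Lemma d_Gam c1 c2 t : t < 1 -> derivable_pt_lim (fun t => c1 * t + c2 * ((1 - t) * ln (1 - t) + t)) t
   (c1 + c2 * (- ln (1 - t))).
Proof.
  intros h. apply is_derive_Reals. auto_derive. lra. replace (1 + - t) with (1 - t) by ring. field. lra.
Qed.

Lemma d_H (Q G : R -> R) dQ dG t : derivable_pt_lim Q t dQ -> derivable_pt_lim G t dG ->
  derivable_pt_lim (fun t => Q t * exp (- G t)) t ((dQ - Q t * dG) * exp (- G t)).
Proof.
  intros h1 h2. apply is_derive_Reals. apply is_derive_Reals in h1. apply is_derive_Reals in h2.
  auto_derive. split. exists dQ; auto. split. exists dG; auto. auto.
  replace (Derive (fun x => Q x) t) with dQ by (symmetry; apply is_derive_unique; auto).
  replace (Derive (fun x => G x) t) with dG by (symmetry; apply is_derive_unique; auto). ring.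
Qed.

Lemma d_sq (f g : R -> R) df dg t : derivable_pt_lim f t df -> derivable_pt_lim g t dg ->
  derivable_pt_lim (fun t => f t ^ 2 + g t ^ 2) t (2 * (f t * df + g t * dg)).
Proof.
  intros h1 h2. apply is_derive_Reals. apply is_derive_Reals in h1. apply is_derive_Reals in h2.
  auto_derive. split. exists df; auto. split. exists dg; auto. auto.
  replace (Derive (fun x => f x) t) with df by (symmetry; apply is_derive_unique; auto).
  replace (Derive (fun x => g x) t) with dg by (symmetry; apply is_derive_unique; auto). ring.
Qed.

Lemma d_plus (f g : R -> R) df dg t : derivable_pt_lim f t df -> derivable_pt_lim g t dg ->
  derivable_pt_lim (fun t => f t + g t) t (df + dg).
Proof. intros. apply (derivable_pt_lim_plus f g); auto. Qed.

Lemma d_const (c : R) t : derivable_pt_lim (fun _ => c) t 0.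
Proof. apply derivable_pt_lim_const. Qed.

Lemma Cmod_unit w : fst w^2 + snd w^2 = 1 -> Cmod w = 1.
Proof. intros h. unfold Cmod. rewrite h. apply sqrt_1. Qed.

Lemma rp0 w : rp w 0 = C0.
Proof. unfold rp, C0. f_equal; ring. Qed.

Lemma rp_in w t : fst w^2 + snd w^2 = 1 -> Rabs t < 1 -> inD (rp w t).
Proof. intros. unfold inD. rewrite Cmod_rp; auto. Qed.

Lemma bloch_bound g : bloch g -> exists M, 0 <= M /\ forall w r, fst w^2+snd w^2 = 1 -> 0 <= r < 1 ->
  Cmod (g (rp w r)) <= Cmod (g C0) + M * (- ln (1 - r)).
Proof.
  intros [g' [hd [M hM]]]. exists (Rmax 0 M). split. apply Rmax_l.
  intros w r hw hr.
  pose proof (compare (fun t => fst (g (rp w t))) (fun t => snd (g (rp w t)))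
     (fun t => - Rmax 0 M * ln (1 - t))
     (fun t => fst (Cmul (g' (rp w t)) w)) (fun t => snd (Cmul (g' (rp w t)) w))
     (fun t => Rmax 0 M / (1 - t)) r (proj1 hr)) as hc.
  cbv beta in hc.
  assert (hin : forall t, 0 <= t <= r -> inD (rp w t)).
  { intros t ht. apply rp_in; auto. rewrite Rabs_right; lra. }
  assert (H : Cmod (fst (g (rp w r)) - fst (g (rp w 0)), snd (g (rp w r)) - snd (g (rp w 0))) <=
       - Rmax 0 M * ln (1 - r) - - Rmax 0 M * ln (1 - 0)).
  { apply hc.
    - intros t ht. destruct (ray_deriv g (g' (rp w t)) w t hw (hd _ (hin t ht))) as [a b].
      repeat split; auto. apply d_v; lra.
    - intros t ht. replace (fst (Cmul (g' (rp w t)) w), snd (Cmul (g' (rp w t)) w))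
        with (Cmul (g' (rp w t)) w) by (destruct (Cmul (g' (rp w t)) w); auto).
      rewrite Cmod_mul, (Cmod_unit w hw), Rmult_1_r.
      pose proof (hM _ (hin t ht)) as hb. rewrite Cmod_rp, Rabs_right in hb by (auto; lra).
      rewrite Rpower_1 in hb by nra.
      pose proof (Cmod_ge0 (g' (rp w t))). pose proof (Rmax_r 0 M).
      apply Rmult_le_reg_r with (1 - t). lra. unfold Rdiv. rewrite Rmult_assoc, Rinv_l by lra. assert (0 <= t*(1-t)) by nra. assert (0 <= Cmod (g' (rp w t)) * (t*(1-t))) by nra. nra. }
  replace (1 - 0) with 1 in H by ring. rewrite ln_1, Rmult_0_r, Rminus_0_r in H.
  rewrite rp0 in H.
  replace (g (rp w r)) with (Cadd (g C0) (fst (g (rp w r)) - fst (g C0), snd (g (rp w r)) - snd (g C0))).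
  eapply Rle_trans. apply Cmod_tri. lra.
  unfold Cadd. cbn [fst snd]. destruct (g (rp w r)). cbn [fst snd]. f_equal; ring.
Qed.

Lemma Cdec (z : Cplx) : {z = C0} + {z <> C0}.
Proof.
  destruct z as [x y]. destruct (Req_dec_T x 0); destruct (Req_dec_T y 0); subst.
  left; reflexivity.
  all: right; intro h; inversion h; auto.
Qed.

Lemma key n0 k (A F : nat -> Cplx -> Cplx) p (P : nat -> Cplx) a m : 1 < n0 -> 0 <= a -> 0 <= m ->
  (forall j, (j <= k)%nat -> is_rpow n0 (F j p) (P j)) ->
  Cadd (P k) (Csum k (fun j => Cmul (A j p) (P j))) = C0 ->
  (forall j, (j < k)%nat -> Cmod (A j p) <= a) ->
  (forall j, (j < k)%nat -> Cmod (F j p) <= m) ->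
  Cmod (F k p) <= (1 + INR k * a) * m.
Proof.
  intros hn ha hm hP hE hA hF.
  pose proof (pos_INR k) as hk.
  destruct (Rle_or_lt (Cmod (F k p)) m) as [hle|hlt]. { assert (0 <= INR k * a) by (apply Rmult_le_pos; lra). nra. }
  assert (hFk : F k p <> C0).
  { intro e. rewrite e, Cmod_C0 in hlt. lra. }
  pose proof (rpow_mod _ _ _ (hP k (Nat.le_refl k)) hFk) as hPk.
  pose proof (Cmod_opp_eq _ _ hE) as hE'. rewrite hPk in hE'.
  destruct (Req_dec m 0) as [m0|mp].
  - subst m. exfalso.
    assert (Cmod (Csum k (fun j => Cmul (A j p) (P j))) <= INR k * 0).
    { apply Csum_bound. intros j hj. rewrite Cmod_mul.
      destruct (Cdec (F j p)) as [e|ne].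
      - rewrite (rpow_0 _ _ _ (hP j ltac:(lia)) e), Cmod_C0. lra.
      - pose proof (Cmod_pos _ ne). pose proof (hF j hj). lra. }
    unfold Rpower in hE'. pose proof (exp_pos (n0 * ln (Cmod (F k p)))). lra.
  - assert (hmp : 0 < m) by lra.
    assert (Cmod (Csum k (fun j => Cmul (A j p) (P j))) <= INR k * (a * Rpower m n0)).
    { apply Csum_bound. intros j hj. rewrite Cmod_mul.
      apply Rmult_le_compat. apply Cmod_ge0. apply Cmod_ge0. auto.
      destruct (Cdec (F j p)) as [e|ne].
      - rewrite (rpow_0 _ _ _ (hP j ltac:(lia)) e), Cmod_C0. unfold Rpower. left; apply exp_pos.
      - rewrite (rpow_mod _ _ _ (hP j ltac:(lia)) ne). apply Rle_Rpower_l. lra.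
        split. apply Cmod_pos; auto. auto. }
    set (x := Cmod (F k p)) in *.
    set (y := x / m).
    assert (hx : x = y * m) by (unfold y; field; lra).
    assert (hy : 1 < y) by (unfold y; apply Rmult_lt_reg_r with m; auto; unfold Rdiv; rewrite Rmult_assoc, Rinv_l; lra).
    rewrite hx, <- Rpower_mult_distr in hE' by lra.
    assert (Rpower y n0 <= INR k * a).
    { apply Rmult_le_reg_r with (Rpower m n0). unfold Rpower; apply exp_pos. rewrite hE'. lra. }
    assert (y <= Rpower y n0).
    { rewrite <- (Rpower_1 y) at 1 by lra. apply Rle_Rpower; lra. }
    assert (x <= INR k * a * m) by (rewrite hx; nra).
    unfold x in *. nra.
Qed.

Fixpoint sumR (n : nat) (f : nat -> R) : R :=
  match n with O => 0 | S n' => sumR n' f + f n' end.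

Lemma sumR_bound n f B : (forall j, (j < n)%nat -> f j <= B) -> sumR n f <= INR n * B.
Proof.
  induction n; intros h; cbn [sumR].
  - change (INR 0) with 0. lra.
  - rewrite S_INR. assert (sumR n f <= INR n * B) by (apply IHn; intros; apply h; lia).
    assert (f n <= B) by (apply h; lia). lra.
Qed.

Lemma sumR_ge n f j : (forall i, (i < n)%nat -> 0 <= f i) -> (j < n)%nat -> f j <= sumR n f.
Proof.
  induction n; intros h hj. lia. cbn [sumR].
  assert (0 <= sumR n f).
  { clear -h. induction n. cbn; lra. cbn [sumR]. assert (0 <= f n) by (apply h; lia).
    assert (0 <= sumR n f) by (apply IHn; intros; apply h; lia). lra. }
  destruct (Nat.eq_dec j n). subst. lra.
  assert (f j <= sumR n f) by (apply IHn; intros; try apply h; lia).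
  assert (0 <= f n) by (apply h; lia). lra.
Qed.

Lemma sumR_ge0 n f : (forall i, (i < n)%nat -> 0 <= f i) -> 0 <= sumR n f.
Proof.
  induction n; intros h. cbn; lra. cbn [sumR]. assert (0 <= f n) by (apply h; lia).
  assert (0 <= sumR n f) by (apply IHn; intros; apply h; lia). lra.
Qed.

Lemma d_sumR n (g dg : nat -> R -> R) t : (forall j, (j < n)%nat -> derivable_pt_lim (g j) t (dg j t)) ->
  derivable_pt_lim (fun t => sumR n (fun j => g j t)) t (sumR n (fun j => dg j t)).
Proof.
  induction n; intros h; cbn [sumR].
  - apply d_const.
  - apply (d_plus (fun t => sumR n (fun j => g j t)) (g n)). apply IHn; intros; apply h; lia.
    apply h; lia.
Qed.

Definition Qp (F : nat -> Cplx -> Cplx) k p := sumR k (fun j => fst (F j p)^2 + snd (F j p)^2).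

Lemma Qp_ge0 F k p : 0 <= Qp F k p.
Proof. apply sumR_ge0. intros; nra. Qed.

Lemma Qp_ge F k p j : (j < k)%nat -> Cmod (F j p) <= sqrt (Qp F k p).
Proof.
  intros hj. unfold Cmod. apply sqrt_le_1_alt. unfold Qp.
  apply (sumR_ge k (fun j => fst (F j p)^2 + snd (F j p)^2)); auto. intros; nra.
Qed.

Lemma ln_le' x y : 0 < x -> x <= y -> ln x <= ln y.
Proof. intros h [l|e]. left; apply ln_increasing; auto. subst; lra. Qed.

Lemma exp_le' x y : x <= y -> exp x <= exp y.
Proof. intros [l|e]. left; apply exp_increasing; auto. subst; lra. Qed.

Lemma mlog r : 0 <= r < 1 -> 0 <= - ln (1 - r).
Proof. intros. assert (ln (1 - r) <= ln 1) by (apply ln_le'; lra). rewrite ln_1 in H0. lra. Qed.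

Lemma bloch_all k (A : nat -> Cplx -> Cplx) : (forall j, (j<k)%nat -> bloch (A j)) ->
  exists al M, 0 <= al /\ 0 <= M /\ forall j w r, (j<k)%nat -> fst w^2+snd w^2 = 1 -> 0 <= r < 1 ->
   Cmod (A j (rp w r)) <= al + M * (- ln (1 - r)).
Proof.
  induction k; intros h.
  - exists 0, 0. repeat split; try lra. intros; lia.
  - destruct IHk as [al [M [h1 [h2 h3]]]]. intros; apply h; lia.
    destruct (bloch_bound (A k) (h k ltac:(lia))) as [M' [h4 h5]].
    exists (al + Cmod (A k C0)), (M + M'). pose proof (Cmod_ge0 (A k C0)).
    repeat split; try lra. intros j w r hj hw hr. pose proof (mlog r hr).
    destruct (Nat.eq_dec j k).
    + subst. pose proof (h5 w r hw hr). nra.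
    + pose proof (h3 j w r ltac:(lia) hw hr). nra.
Qed.

Lemma Cmod_eta x : Cmod (fst x, snd x) = Cmod x.
Proof. destruct x; auto. Qed.

Section Gron.
Variables (k : nat) (A F : nat -> Cplx -> Cplx) (al M : R).
Hypothesis hal : 0 <= al.
Hypothesis hM : 0 <= M.
Hypothesis hF : forall j z, inD z -> has_cderiv (F j) z (F (S j) z).
Hypothesis hb : forall z a m, inD z -> 0 <= a -> 0 <= m ->
  (forall j, (j<k)%nat -> Cmod (A j z) <= a) -> (forall j, (j<k)%nat -> Cmod (F j z) <= m) ->
  Cmod (F k z) <= (1 + INR k * a) * m.
Hypothesis hA : forall j w r, (j<k)%nat -> fst w^2+snd w^2 = 1 -> 0 <= r < 1 ->
   Cmod (A j (rp w r)) <= al + M * (- ln (1 - r)).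

Lemma next_bound w t j : fst w^2+snd w^2 = 1 -> 0 <= t < 1 -> (j < k)%nat ->
  Cmod (F (S j) (rp w t)) <= (1 + INR k * (al + M * (- ln (1 - t)))) * sqrt (Qp F k (rp w t)).
Proof.
  intros hw ht hj. pose proof (mlog t ht). pose proof (pos_INR k).
  assert (0 <= INR k * (al + M * - ln (1 - t))) by (apply Rmult_le_pos; nra).
  pose proof (sqrt_pos (Qp F k (rp w t))).
  destruct (Nat.eq_dec (S j) k).
  - rewrite e. apply hb; [apply rp_in; auto; rewrite Rabs_right; lra | nra | auto
      | intros; apply hA; auto | intros; apply Qp_ge; auto].
  - pose proof (Qp_ge F k (rp w t) (S j) ltac:(lia)). nra.
Qed.

Definition c1 := 2 * INR k * (1 + INR k * al).
Definition c2 := 2 * INR k * INR k * M.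
Definition Gam t := c1 * t + c2 * ((1 - t) * ln (1 - t) + t).

Lemma gron w r : fst w^2+snd w^2 = 1 -> 0 <= r < 1 ->
  Qp F k (rp w r) <= Qp F k C0 * exp (c1 + c2).
Proof.
  intros hw hr.
  set (dQ := fun t => sumR k (fun j => 2 * (fst (F j (rp w t)) * fst (Cmul (F (S j) (rp w t)) w)
       + snd (F j (rp w t)) * snd (Cmul (F (S j) (rp w t)) w)))).
  assert (hin : forall t, 0 <= t <= r -> inD (rp w t)).
  { intros t ht. apply rp_in; auto. rewrite Rabs_right; lra. }
  pose proof (decr (fun t => Qp F k (rp w t) * exp (- Gam t))
     (fun t => (dQ t - Qp F k (rp w t) * (c1 + c2 * (- ln (1 - t)))) * exp (- Gam t)) 0 r (proj1 hr)) as H.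
  cbv beta in H.
  assert (Hm : Qp F k (rp w r) * exp (- Gam r) <= Qp F k (rp w 0) * exp (- Gam 0)).
  { apply H.
    - intros t ht. apply d_H.
      + unfold Qp, dQ.
        apply (d_sumR k (fun j t => fst (F j (rp w t)) ^ 2 + snd (F j (rp w t)) ^ 2)
          (fun j t => 2 * (fst (F j (rp w t)) * fst (Cmul (F (S j) (rp w t)) w)
       + snd (F j (rp w t)) * snd (Cmul (F (S j) (rp w t)) w)))).
        intros j hj. destruct (ray_deriv (F j) (F (S j) (rp w t)) w t hw (hF _ _ (hin t ht))) as [d1 d2].
        apply (d_sq (fun t => fst (F j (rp w t))) (fun t => snd (F j (rp w t)))); auto.
      + unfold Gam. apply d_Gam. lra.
    - intros t ht. assert (ht' : 0 <= t < 1) by lra.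
      assert (dQ t <= INR k * (2 * (1 + INR k * (al + M * (- ln (1 - t)))) * Qp F k (rp w t))).
      { unfold dQ. apply sumR_bound. intros j hj.
        pose proof (dot_le (fst (F j (rp w t))) (snd (F j (rp w t)))
           (fst (Cmul (F (S j) (rp w t)) w)) (snd (Cmul (F (S j) (rp w t)) w))) as hd.
        rewrite !Cmod_eta, Cmod_mul, (Cmod_unit w hw), Rmult_1_r in hd.
        pose proof (next_bound w t j hw ht' hj).
        pose proof (Qp_ge F k (rp w t) j hj).
        pose proof (sqrt_sqrt (Qp F k (rp w t)) (Qp_ge0 _ _ _)).
        pose proof (Cmod_ge0 (F j (rp w t))). pose proof (Cmod_ge0 (F (S j) (rp w t))).
        pose proof (sqrt_pos (Qp F k (rp w t))).
        assert (Cmod (F j (rp w t)) * Cmod (F (S j) (rp w t)) <=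
           sqrt (Qp F k (rp w t)) * ((1 + INR k * (al + M * - ln (1 - t))) * sqrt (Qp F k (rp w t)))).
        { apply Rmult_le_compat; auto. }
        nra. }
      pose proof (exp_pos (- Gam t)).
      assert (dQ t - Qp F k (rp w t) * (c1 + c2 * - ln (1 - t)) <= 0).
      { unfold c1, c2. nra. }
      nra. }
  rewrite rp0 in Hm. unfold Gam at 2 in Hm.
  replace (1 - 0) with 1 in Hm by ring. rewrite ln_1 in Hm.
  replace (- (c1 * 0 + c2 * (1 * 0 + 0))) with 0 in Hm by ring. rewrite exp_0, Rmult_1_r in Hm.
  assert (hG : Gam r <= c1 + c2).
  { unfold Gam. assert (ln (1 - r) <= 0) by (pose proof (mlog r hr); lra).
    pose proof (pos_INR k). assert (0 <= c1) by (unfold c1; nra). assert (0 <= c2) by (unfold c2; nra).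
    assert (0 <= 1 - r) by lra.
    assert ((1 - r) * ln (1 - r) <= 0) by nra. nra. }
  pose proof (exp_le' _ _ hG). pose proof (Qp_ge0 F k C0). pose proof (Qp_ge0 F k (rp w r)).
  assert (e : Qp F k (rp w r) = Qp F k (rp w r) * exp (- Gam r) * exp (Gam r)).
  { rewrite Rmult_assoc, <- exp_plus. replace (- Gam r + Gam r) with 0 by ring. rewrite exp_0. ring. }
  rewrite e. pose proof (exp_pos (Gam r)).
  apply Rle_trans with (Qp F k C0 * exp (Gam r)). apply Rmult_le_compat_r; lra.
  apply Rmult_le_compat_l; lra.
Qed.
End Gron.

Lemma powbound r s : 0 <= r < 1 -> 0 < s ->
  Rpower (1 - r^2) s <= 1 /\ (- ln (1 - r)) * Rpower (1 - r^2) s <= Rpower 2 s / s.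
Proof.
  intros hr hs. unfold Rpower.
  assert (h1 : ln (1 - r^2) <= 0).
  { rewrite <- ln_1. apply ln_le'; nra. }
  split.
  - apply Rle_trans with (exp 0); [apply exp_le'; nra | rewrite exp_0; lra].
  - assert (e : 1 - r^2 = (1 - r) * (1 + r)) by ring. rewrite e.
    rewrite ln_mult by lra.
    assert (ln (1 + r) <= ln 2) by (apply ln_le'; lra).
    set (y := - (s * ln (1 - r))).
    assert (hy : 0 <= y) by (unfold y; pose proof (mlog r hr); nra).
    assert (exp (s * (ln (1 - r) + ln (1 + r))) <= exp (-y) * exp (s * ln 2)).
    { rewrite <- exp_plus. apply exp_le'. unfold y. nra. }
    assert (hL : - ln (1 - r) = y / s) by (unfold y; field; lra).
    rewrite hL.
    assert (y * exp (- y) <= 1).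
    { pose proof (exp_ineq1_le y). pose proof (exp_pos (-y)).
      assert (exp (-y) * exp y = 1) by (rewrite <- exp_plus; replace (-y+y) with 0 by ring; apply exp_0).
      nra. }
    pose proof (exp_pos (s * ln 2)). pose proof (exp_pos (-y)).
    apply Rle_trans with (y / s * (exp (-y) * exp (s * ln 2))).
    apply Rmult_le_compat_l; auto. unfold Rdiv. apply Rmult_le_pos; auto. left; apply Rinv_0_lt_compat; auto.
    unfold Rdiv. apply Rmult_le_reg_r with s; auto.
    replace (y * / s * (exp (- y) * exp (s * ln 2)) * s) with (y * exp (-y) * exp (s * ln 2)) by (field; lra).
    replace (exp (s * ln 2) * / s * s) with (exp (s * ln 2)) by (field; lra). nra.
Qed.

Lemma polar_decomp z : exists w, fst w ^2 + snd w ^2 = 1 /\ z = rp w (Cmod z).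
Proof.
  destruct (Cdec z) as [e|ne].
  - exists (1, 0). cbn [fst snd]. split. ring. subst. rewrite Cmod_C0, rp0. auto.
  - pose proof (Cmod_pos z ne). pose proof (Cmod_sq z).
    exists (fst z / Cmod z, snd z / Cmod z). cbn [fst snd]. split.
    + field_simplify; [|lra]. rewrite <- H0. field. lra.
    + unfold rp. cbn [fst snd]. destruct z as [x y]. cbn [fst snd]. f_equal; field; lra.
Qed.

Theorem theorem3p5 (k : nat) (n0 : R) (A : nat -> Cplx -> Cplx)
  (hk : (1 <= k)%nat) (hn0 : 1 < n0)
  (hA : forall j, (j < k)%nat -> bloch (A j))
  (hAnz : exists j, (j < k)%nat /\ exists z, inD z /\ A j z <> C0)
  (hnu : exists nu, 0 <= nu < 1 /\
     forall theta, 0 <= theta < 2 * PI ->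
       exists j, (j < k)%nat /\ A j (polar nu theta) <> C0) :
  forall (f : Cplx -> Cplx) (F : nat -> Cplx -> Cplx),
    (forall z, inD z -> F O z = f z) ->
    (forall j z, inD z -> has_cderiv (F j) z (F (S j) z)) ->
    (forall z, inD z -> exists P : nat -> Cplx,
       (forall j, (j <= k)%nat -> is_rpow n0 (F j z) (P j)) /\
       Cadd (P k) (Csum k (fun j => Cmul (A j z) (P j))) = C0) ->
    forall s, 0 < s -> bloch_type s f.
Proof.
  intros f F hf0 hF hE s hs.
  destruct (bloch_all k A hA) as [al [M [hal [hM hAb]]]].
  assert (hb : forall z a m, inD z -> 0 <= a -> 0 <= m ->
    (forall j, (j<k)%nat -> Cmod (A j z) <= a) -> (forall j, (j<k)%nat -> Cmod (F j z) <= m) ->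
    Cmod (F k z) <= (1 + INR k * a) * m).
  { intros z a m hz ha hm h1 h2. destruct (hE z hz) as [P [hP hEq]].
    exact (key n0 k A F z P a m hn0 ha hm hP hEq h1 h2). }
  exists (F 1%nat). split.
  - intros z hz eps heps. destruct (hF 0%nat z hz eps heps) as [d [hd hh]].
    exists (Rmin d (1 - Cmod z)). split. apply Rmin_glb_lt; auto. unfold inD in hz; lra.
    intros h h0 hlt.
    assert (inD (Cadd z h)).
    { unfold inD. pose proof (Cmod_tri z h). pose proof (Rmin_r d (1 - Cmod z)). lra. }
    rewrite <- (hf0 _ H), <- (hf0 _ hz). apply hh; auto.
    pose proof (Rmin_l d (1 - Cmod z)). lra.
  - set (B := sqrt (Qp F k C0 * exp (Submission.c1 k al + Submission.c2 k M))).
    pose proof (pos_INR k) as hkp.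
    exists ((1 + INR k * al) * B + INR k * M * B * (Rpower 2 s / s)).
    intros z hz.
    destruct (polar_decomp z) as [w [hw ez]].
    set (r := Cmod z) in *.
    assert (hr : 0 <= r < 1) by (split; [apply Cmod_ge0| exact hz]).
    pose proof (next_bound k A F al M hal hM hb hAb w r 0%nat hw hr ltac:(lia)) as hn.
    pose proof (gron k A F al M hal hM hF hb hAb w r hw hr) as hg.
    rewrite <- ez in hn, hg.
    assert (sqrt (Qp F k z) <= B) by (apply sqrt_le_1_alt; auto).
    destruct (powbound r s hr hs) as [p1 p2].
    pose proof (mlog r hr) as hl.
    assert (0 <= Rpower (1 - r^2) s) by (unfold Rpower; left; apply exp_pos).
    pose proof (sqrt_pos (Qp F k z)).
    assert (0 <= B) by apply sqrt_pos.
    set (L := - ln (1 - r)) in *.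
    set (Rp := Rpower (1 - r^2) s) in *.
    assert (Cmod (F 1%nat z) <= (1 + INR k * (al + M * L)) * B).
    { eapply Rle_trans. exact hn. apply Rmult_le_compat_l; auto.
      assert (0 <= INR k * (al + M*L)) by (apply Rmult_le_pos; nra). lra. }
    pose proof (Cmod_ge0 (F 1%nat z)).
    apply Rle_trans with ((1 + INR k * (al + M * L)) * B * Rp).
    apply Rmult_le_compat_r; auto.
    replace ((1 + INR k * (al + M * L)) * B * Rp) with
      ((1 + INR k * al) * B * Rp + INR k * M * B * (L * Rp)) by ring.
    apply Rplus_le_compat.
    + assert (0 <= (1 + INR k * al) * B) by (apply Rmult_le_pos; nra). nra.
    + apply Rmult_le_compat_l; auto. apply Rmult_le_pos; auto. apply Rmult_le_pos; auto.
Qed.
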